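(* Let ${\bf S}\in\{{\bf Tmd},{\bf Tm4d}\}$. Then ${\bf S}$ cannot be characterized by a single finite deterministic logical matrix; that is, there is no logical matrix $\mathcal M=\langle M,D\rangle$ with $M$ finite such that, for all $\Gamma\cup\{\alpha\}\subseteq For$, $\Gamma\vdash_{\bf S}\alpha$ iff $\Gamma\vDash_{\mathcal M}\alpha$.
   Context: Formulas are built from a denumerable set of propositional variables by the unary connectives $\neg$, $\Box$ and the binary connective $\to$; $For$ is the set of all formulas. Abbreviations: $\Diamond\alpha:=\neg\Box\neg\alpha$, $\alpha\vee\beta:=\neg\alpha\to\beta$, $\alpha\wedge\beta:=\neg(\alpha\to\neg\beta)$. All Hilbert calculi below have as axioms all instances (over $For$) of the axiom schemas of a standard Hilbert calculus for classical propositional logic in the signature $\{\neg,\to\}$, plus the listed modal schemas, with modus ponens as the only rule; $\Gamma\vdash_{\bf L}\alpha$ means there is a derivation of $\alpha$ from $\Gamma$ in ${\bf L}$. ${\bf Tmd}$: (K) $\Box(\alpha\to\beta)\to(\Box\alpha\to\Box\beta)$; (Kdet) $\Box(\alpha\to\beta)\to(\Diamond\alpha\to\Box\beta)$; (K2) $\Diamond(\alpha\to\beta)\to(\Box\alpha\to\Diamond\beta)$; (M1) $\neg\Diamond\alpha\to\Box(\alpha\to\beta)$; (M2) $\Box\beta\to\Box(\alpha\to\beta)$; (M3) $\Diamond\beta\to\Diamond(\alpha\to\beta)$; (M4) $\Diamond\neg\alpha\to\Diamond(\alpha\to\beta)$; (T) $\Box\alpha\to\alpha$; (DN1) $\Box\alpha\to\Box\neg\neg\alpha$;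 (DN2) $\Box\neg\neg\alpha\to\Box\alpha$. ${\bf Tm4d}$ (also written ${\bf T4md}$) is ${\bf Tmd}$ plus (4) $\Box\alpha\to\Box\Box\alpha$. A (deterministic) logical matrix $\mathcal M=\langle M,D\rangle$ consists of a set $M$ with unary operations for $\neg,\Box$ and a binary operation for $\to$, and $D\subseteq M$; valuations are homomorphisms $h:For\to M$, and $\Gamma\vDash_{\mathcal M}\alpha$ iff every valuation mapping $\Gamma$ into $D$ maps $\alpha$ into $D$. *)

(* Defs.v *)
From mathcomp Require Import all_boot.
Set Implicit Arguments.
Unset Strict Implicit.
Unset Printing Implicit Defensive.

Inductive For : Type :=
| Var : nat -> For
| Neg : For -> For
| Box : For -> For
| Imp : For -> For -> For.

Definition Dia (a : For) : For := Neg (Box (Neg a)).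

Inductive logic : Type := Tmd | Tm4d.

Inductive cpl_axiom : For -> Prop :=
| A1 a b : cpl_axiom (Imp a (Imp b a))
| A2 a b c : cpl_axiom (Imp (Imp a (Imp b c)) (Imp (Imp a b) (Imp a c)))
| A3 a b : cpl_axiom (Imp (Imp (Neg b) (Neg a)) (Imp (Imp (Neg b) a) b)).

Inductive tmd_axiom : For -> Prop :=
| AxK a b : tmd_axiom (Imp (Box (Imp a b)) (Imp (Box a) (Box b)))
| AxKdet a b : tmd_axiom (Imp (Box (Imp a b)) (Imp (Dia a) (Box b)))
| AxK2 a b : tmd_axiom (Imp (Dia (Imp a b)) (Imp (Box a) (Dia b)))
| AxM1 a b : tmd_axiom (Imp (Neg (Dia a)) (Box (Imp a b)))
| AxM2 a b : tmd_axiom (Imp (Box b) (Box (Imp a b)))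
| AxM3 a b : tmd_axiom (Imp (Dia b) (Dia (Imp a b)))
| AxM4 a b : tmd_axiom (Imp (Dia (Neg a)) (Dia (Imp a b)))
| AxT a : tmd_axiom (Imp (Box a) a)
| AxDN1 a : tmd_axiom (Imp (Box a) (Box (Neg (Neg a))))
| AxDN2 a : tmd_axiom (Imp (Box (Neg (Neg a))) (Box a)).

Definition axiom (S : logic) (f : For) : Prop :=
  match S with
  | Tmd => cpl_axiom f \/ tmd_axiom f
  | Tm4d => cpl_axiom f \/ tmd_axiom f \/ (exists a, f = Imp (Box a) (Box (Box a)))
  end.

Inductive derives (S : logic) (Gamma : For -> Prop) : For -> Prop :=
| d_hyp a : Gamma a -> derives S Gamma a
| d_ax a : axiom S a -> derives S Gamma a
| d_mp a b : derives S Gamma (Imp a b) -> derives S Gamma a -> derives S Gamma b.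

Definition hom (M : Type) (neg box : M -> M) (imp : M -> M -> M) (h : For -> M) : Prop :=
  (forall a, h (Neg a) = neg (h a)) /\
  (forall a, h (Box a) = box (h a)) /\
  (forall a b, h (Imp a b) = imp (h a) (h b)).

Definition mconseq (M : Type) (neg box : M -> M) (imp : M -> M -> M) (D : M -> Prop)
  (Gamma : For -> Prop) (a : For) : Prop :=
  forall h, hom neg box imp h -> (forall g, Gamma g -> D (h g)) -> D (h a).

(* Main.v *)
Require Import Defs.
From mathcomp Require Import all_boot.

Inductive V4 := VT | Vt | Vf | VF.

Definition isT (x : V4) := if x is VT then true else false.
Definition des (x : V4) := match x with VT | Vt => true | _ => false end.
Definition neg4 (x : V4) := match x with VT => VF | Vt => Vf | Vf => Vt | VF => VT end.
Definition isF (x : V4) := if x is VF then true else false.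
Definition imp4 (x y : V4) :=
  if isF x || isT y then VT else if isT x && isF y then VF
  else if des x ==> des y then Vt else Vf.
Definition bx (x : V4) (s : bool) := if isT x then VT else if s then VF else Vf.

Fixpoint nc (a : For) : nat * option nat :=
  match a with
  | Var n => (0, Some n)
  | Neg b => let (k, o) := nc b in (k.+1, o)
  | _ => (0, None)
  end.

Definition special (a : For) : bool :=
  match nc a with (k, Some n) => k == n | _ => false end.
Arguments special : simpl never.

Fixpoint val (a : For) : V4 :=
  match a with
  | Var _ => Vt
  | Neg b => neg4 (val b)
  | Imp b c => imp4 (val b) (val c)
  | Box b => bx (val b) (special b)
  end.

Ltac brute := repeat match goal with |- context [special ?x] => case: (special x) end;
  repeat match goal with |- context [val ?x] => case: (val x) end; done.

Lemma ax_ok S a : axiom S a -> des (val a).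
Proof.
case: S => /=.
- case=> H; case: H => *;
  rewrite /Dia /=; brute.
- case=> [H|[H|[x ->]]]; try (case: H => * );
  rewrite /Dia /=; brute.
Qed.

Lemma sound S G a : derives S G a -> (forall g, G g -> des (val g)) -> des (val a).
Proof.
elim=> [b Hb|b Hb|b c _ IH1 _ IH2] HG; first exact: HG.
  exact: ax_ok Hb.
have := IH1 HG; have := IH2 HG => /=.
by case: (val b); case: (val c).
Qed.

Definition Fc (k : nat) (x : For) := Box (Neg (Box (iter k Neg x))).

Lemma nc_iter k n : nc (iter k Neg (Var n)) = (k, Some n).
Proof. by elim: k => //= k ->. Qed.

Lemma val_iter k n : isT (val (iter k Neg (Var n))) = false.
Proof.
suff: val (iter k Neg (Var n)) = Vt \/ val (iter k Neg (Var n)) = Vf by case=> ->.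
elim: k => [|k] /=; first by left.
by case=> ->; [right|left].
Qed.

Theorem mainTheorem5 :
  forall (S : logic) (M : finType) (neg box : M -> M) (imp : M -> M -> M) (D : M -> Prop),
    ~ (forall (Gamma : For -> Prop) (a : For),
          derives S Gamma a <-> mconseq neg box imp D Gamma a).
Proof.
move=> S M neg box imp D H.
pose q := Neg (Var 0).
pose G := fun g => (exists x, g = Imp x x) \/
   (exists i j, i != j /\ g = Imp (Imp (Fc i (Var i)) (Fc i (Var j))) q).
suff: derives S G q.
  move=> /sound Hs; suff: des (val q) by []; apply: Hs.
  move=> g [[x ->]|[i [j [ij ->]]]] /=; first by case: (val x).
  rewrite /bx val_iter /special nc_iter eqxx /=.
  rewrite val_iter /special nc_iter /=.
  by rewrite (negbTE ij).
apply/H => h hh HG.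
have MP : forall a b, D (h (Imp a b)) -> D (h a) -> D (h b).
  move=> a b Hab Ha.
  have: derives S (fun g => g = a \/ g = Imp a b) b.
    by apply: (d_mp (a := a)); apply: d_hyp; [right|left].
  move/H; apply => // g [->|->] //.
case: hh => hN [hB hI].
have hit : forall k x, h (iter k Neg x) = iter k neg (h x).
  by move=> k x; elim: k => //= k <-; rewrite hN.
pose f := fun i : 'I_(#|M|.+1) => h (Var i).
have : ~~ injectiveb f.
  apply/negP => /injectiveP inj.
  by have := @leq_card _ _ f inj; rewrite card_ord ltnn.
case/injectivePn => i' [j'] ij' fij.
set i := nat_of_ord i'; set j := nat_of_ord j'.
have ij : i != j by [].
apply: (MP (Imp (Fc i (Var i)) (Fc i (Var j)))).
  apply HG; right; exists i, j; split => //.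
have -> : h (Imp (Fc i (Var i)) (Fc i (Var j))) = h (Imp (Fc i (Var i)) (Fc i (Var i))).
  by rewrite !hI /Fc !hB !hN !hB !hit; congr (imp _ (box (neg (box (iter _ _ _))))); 
     rewrite /f in fij; rewrite fij.
by apply HG; left; eexists.
Qed.
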